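(* Let $a,b,m\in\mathbb N_0$ with $a+b\ge1$, let $\mathcal R(m,a,b)$ be the number of red balls in an $(a,b)$-Pólya urn after $m$ balls have been added, and let $\mu(m,a,b)=a\big(1+m/(a+b)\big)$. Then for every $t>0$, \[\mathbb P\big(|\mathcal R(m,a,b)-\mu(m,a,b)|\ge t\,\mu(m,a,b)\big)\le 2\exp\Big(-\frac{t^2a^2}{8(a+b)}\Big).\]
   Context: An $(a,b)$-Pólya urn starts with $a$ red and $b$ blue balls; at each step a ball is drawn uniformly at random and returned together with one additional ball of the same colour. *)

(* Defs.v *)
From Stdlib Require Import Reals Lra Lia.
Open Scope R_scope.

(* Distribution of the number of red balls in an (a,b)-Polya urn.
   urn_pmf a b m r = P(R(m,a,b) = r), defined by the Markov chain of the urn: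
   initially a red balls; at step m' (when a+b+m' balls are present and r'
   are red), a red ball is added with probability r'/(a+b+m'), otherwise a
   blue ball is added. *)
Fixpoint urn_pmf (a b : nat) (m r : nat) : R :=
  match m with
  | O => if Nat.eqb r a then 1 else 0
  | S m' =>
      (match r with
       | O => 0
       | S r' => urn_pmf a b m' r' * (INR r' / INR (a + b + m'))
       end)
      + urn_pmf a b m' r * ((INR (a + b + m') - INR r) / INR (a + b + m'))
  end.

Definition urn_mu (a b m : nat) : R := INR a * (1 + INR m / INR (a + b)).

(* P(|R(m,a,b) - mu| >= t mu); the number of red balls is at most a+m. *)
Definition urn_dev_prob (a b m : nat) (t : R) : R :=
  sum_f_R0 (fun r =>
    if Rle_dec (t * urn_mu a b m) (Rabs (INR r - urn_mu a b m))
    then urn_pmf a b m r else 0) (a + m).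

(* Main.v *)
From Stdlib Require Import Reals Lra Lia Arith.
From Coquelicot Require Import Coquelicot.
Open Scope R_scope.

Require Import Defs.

Lemma exp_quad (z : R) : z <= 1 -> exp z <= 1 + z + z^2.
Proof.
  intros Hz.
  set (h := fun x => (1 + x + x^2) * exp (- x)).
  assert (Hd : forall x, is_derive h x ((x - x^2) * exp (- x))).
  { intros x. unfold h. auto_derive; auto. ring. }
  destruct (MVT_gen h 0 z (fun x => (x - x^2) * exp (- x))) as [c [Hc Heq]].
  { intros x _. apply Hd. }
  { intros x _. apply continuity_pt_filterlim. apply (ex_derive_continuous (V:=R_NormedModule)).
    eexists. apply Hd. }
  assert (Hh0 : h 0 = 1) by (unfold h; rewrite Ropp_0, exp_0; ring).
  assert (Hge : 1 <= h z).
  { assert (0 <= (c - c^2) * exp (- c) * (z - 0)); [|lra].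
    pose proof (exp_pos (-c)).
    unfold Rmin, Rmax in Hc. destruct (Rle_dec 0 z).
    - assert (0 <= c - c^2) by nra.
      apply Rmult_le_pos; [apply Rmult_le_pos|]; lra.
    - assert (c - c^2 <= 0) by nra.
      replace ((c - c ^ 2) * exp (- c) * (z - 0)) with ((c^2 - c) * exp (-c) * (0 - z)) by ring.
      apply Rmult_le_pos; [apply Rmult_le_pos|]; lra. }
  unfold h in Hge.
  assert (E : exp (-z) * exp z = 1) by (rewrite <- exp_plus; replace (-z+z) with 0 by ring; apply exp_0).
  pose proof (exp_pos z). nra.
Qed.

Lemma exp_le (x y : R) : x <= y -> exp x <= exp y.
Proof. intros [H|H]; [left; apply exp_increasing; auto | subst; lra]. Qed.

Lemma hoeff (p y : R) : 0 <= p <= 1 ->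
  p * exp (y * (1 - p)) + (1 - p) * exp (- (y * p)) <= exp (y^2).
Proof.
  intros Hp.
  destruct (Rle_dec (Rabs y) 1) as [Hy|Hy].
  - apply Rabs_le_between in Hy.
    pose proof (exp_quad (y*(1-p)) ltac:(nra)).
    pose proof (exp_quad (-(y*p)) ltac:(nra)).
    pose proof (exp_ineq1_le (y^2)).
    assert (p * exp (y * (1 - p)) <= p * (1 + y*(1-p) + (y*(1-p))^2)) by (apply Rmult_le_compat_l; lra).
    assert ((1-p) * exp (-(y * p)) <= (1-p) * (1 + -(y*p) + (-(y*p))^2)) by (apply Rmult_le_compat_l; lra).
    assert (p*(1-p)*y^2 <= y^2) by (assert (0<=y^2) by nra; nra).
    nra.
  - assert (Ha : 1 < Rabs y) by lra.
    assert (Hyy : Rabs y <= y^2).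
    { replace (y^2) with (Rabs y * Rabs y) by (rewrite <- Rabs_mult; rewrite Rabs_right; [ring| nra]). nra. }
    pose proof (Rle_abs y). pose proof (Rle_abs (-y)). rewrite Rabs_Ropp in H0.
    pose proof (exp_le (y*(1-p)) (y^2) ltac:(nra)).
    pose proof (exp_le (-(y*p)) (y^2) ltac:(nra)).
    assert (p * exp (y * (1 - p)) <= p * exp (y^2)) by (apply Rmult_le_compat_l; lra).
    assert ((1-p) * exp (-(y * p)) <= (1-p) * exp (y^2)) by (apply Rmult_le_compat_l; lra).
    lra.
Qed.

Section U.
Variables a b : nat.

Lemma pmf_zero : forall m r, (a + m < r)%nat -> urn_pmf a b m r = 0.
Proof.
  induction m; intros r Hr; simpl.
  - destruct (Nat.eqb_spec r a); [lia | reflexivity].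
  - destruct r as [|r']; [lia|].
    rewrite (IHm r') by lia. rewrite (IHm (S r')) by lia. ring.
Qed.

Lemma pmf_nonneg : forall m r, 0 <= urn_pmf a b m r.
Proof.
  induction m; intros r; simpl.
  - destruct (Nat.eqb r a); lra.
  - assert (0 <= INR (a+b+m)) by apply pos_INR.
    apply Rplus_le_le_0_compat.
    + destruct r as [|r']; [lra|].
      apply Rmult_le_pos; [apply IHm|].
      destruct (Req_dec (INR (a+b+m)) 0) as [E|E].
      * rewrite E; unfold Rdiv; rewrite Rinv_0; lra.
      * apply Rdiv_le_0_compat; [apply pos_INR|lra].
    + destruct (le_lt_dec r (a+b+m)) as [Hl|Hl].
      * apply le_INR in Hl.
        destruct (Req_dec (INR (a+b+m)) 0) as [E|E].
        -- rewrite E; unfold Rdiv; rewrite Rinv_0; rewrite Rmult_0_r, Rmult_0_r; lra.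
        -- apply Rmult_le_pos; [apply IHm|]. apply Rdiv_le_0_compat; lra.
      * rewrite pmf_zero by lia. lra.
Qed.

Lemma transfer (m : nat) (g : nat -> R) :
  sum_f_R0 (fun r => urn_pmf a b (S m) r * g r) (a + S m) =
  sum_f_R0 (fun r => urn_pmf a b m r *
     (INR r / INR (a+b+m) * g (S r) + (INR (a+b+m) - INR r) / INR (a+b+m) * g r)) (a + m).
Proof.
  rewrite Nat.add_succ_r.
  transitivity (sum_f_R0 (fun r => (match r with O => 0 | S r' => urn_pmf a b m r' * (INR r' / INR (a+b+m)) end) * g r
     + urn_pmf a b m r * ((INR (a+b+m) - INR r) / INR (a+b+m)) * g r) (S (a+m))).
  { apply sum_eq. intros i _. simpl urn_pmf. ring. }
  rewrite plus_sum.
  rewrite decomp_sum by lia. rewrite tech5. simpl pred.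
  rewrite (pmf_zero m (S (a+m))) by lia.
  idtac.
  replace (sum_f_R0 (fun r => urn_pmf a b m r * (INR r / INR (a+b+m) * g (S r) + (INR (a+b+m) - INR r) / INR (a+b+m) * g r)) (a+m))
    with (sum_f_R0 (fun r => urn_pmf a b m r * (INR r / INR (a+b+m)) * g (S r) + urn_pmf a b m r * ((INR (a+b+m) - INR r) / INR (a+b+m)) * g r) (a+m)).
  - rewrite plus_sum. ring.
  - apply sum_eq. intros i _. ring.
Qed.


Lemma sum_single : forall K f, (forall i, (i < K)%nat -> f i = 0) -> sum_f_R0 f K = f K.
Proof.
  induction K; intros f H; simpl; [reflexivity|].
  rewrite IHK by (intros; apply H; lia). rewrite H by lia. ring.
Qed.

Lemma key (N r l A : R) : 0 < N -> 0 <= r <= N ->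
  r / N * exp (l * ((r + 1) / (N + 1) - A)) + (N - r) / N * exp (l * (r / (N + 1) - A))
  <= exp (l * (r / N - A)) * exp ((l / (N + 1)) ^ 2).
Proof.
  intros HN Hr.
  set (p := r / N). set (y := l / (N + 1)).
  assert (Hp : 0 <= p <= 1).
  { unfold p; split; [apply Rdiv_le_0_compat; lra|].
    apply (Rmult_le_reg_r N); [lra|]. unfold Rdiv; rewrite Rmult_assoc, Rinv_l; lra. }
  replace (l * ((r + 1) / (N + 1) - A)) with (l * (p - A) + y * (1 - p))
    by (unfold y, p; field; lra).
  replace (l * (r / (N + 1) - A)) with (l * (p - A) + - (y * p))
    by (unfold y, p; field; lra).
  replace ((N - r) / N) with (1 - p) by (unfold p; field; lra).
  rewrite !exp_plus.
  pose proof (hoeff p y Hp). pose proof (exp_pos (l * (p - A))).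
  replace (p * (exp (l * (p - A)) * exp (y * (1 - p))) +
    (1 - p) * (exp (l * (p - A)) * exp (- (y * p))))
   with (exp (l * (p - A)) * (p * exp (y * (1 - p)) + (1 - p) * exp (- (y * p)))) by ring.
  apply Rmult_le_compat_l; lra.
Qed.

Lemma mgf (Hn : (1 <= a+b)%nat) (l : R) : forall m,
  sum_f_R0 (fun r => urn_pmf a b m r * exp (l * (INR r / INR (a+b+m) - INR a / INR (a+b)))) (a+m)
  <= exp (l^2 * (/ INR (a+b) - / INR (a+b+m))).
Proof.
  induction m.
  - rewrite !Nat.add_0_r. rewrite sum_single.
    + simpl urn_pmf. rewrite Nat.eqb_refl.
      replace (l * (INR a / INR (a + b) - INR a / INR (a + b))) with 0 by ring.
      replace (l ^ 2 * (/ INR (a + b) - / INR (a + b))) with 0 by ring. lra.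
    + intros i Hi. simpl urn_pmf. destruct (Nat.eqb_spec i a); [lia|ring].
  - rewrite (transfer m (fun r => exp (l * (INR r / INR (a + b + S m) - INR a / INR (a + b))))).
    set (N := INR (a+b+m)).
    assert (HN1 : 1 <= N) by (unfold N; replace 1 with (INR 1) by reflexivity; apply le_INR; lia).
    assert (HNS : INR (a + b + S m) = N + 1) by (unfold N; rewrite Nat.add_succ_r, S_INR; ring).
    rewrite HNS.
    apply Rle_trans with (sum_f_R0 (fun r => urn_pmf a b m r * exp (l * (INR r / N - INR a / INR (a + b))) * exp ((l / (N + 1)) ^ 2)) (a + m)).
    { apply sum_Rle. intros i Hi. rewrite Rmult_assoc. apply Rmult_le_compat_l; [apply pmf_nonneg|].
      rewrite S_INR. apply key; [lra|]. split; [apply pos_INR|].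
      unfold N. apply le_INR. lia. }
    rewrite <- scal_sum. rewrite Rmult_comm.
    apply Rle_trans with (exp (l ^ 2 * (/ INR (a + b) - / N)) * exp ((l / (N + 1)) ^ 2)).
    { apply Rmult_le_compat_r; [left; apply exp_pos| apply IHm]. }
    rewrite <- exp_plus. apply exp_le.
    assert (0 <= l^2) by nra.
    assert (Hq : (/ (N+1))^2 <= / N - / (N+1)).
    { replace (/ N - / (N+1)) with (/ (N * (N+1))) by (field; lra).
      replace ((/ (N+1))^2) with (/ ((N+1) * (N+1))) by (field; lra).
      apply Rinv_le_contravar; nra. }
    replace ((l / (N + 1)) ^ 2) with (l^2 * (/ (N+1))^2) by (field; lra).
    nra.
Qed.

End U.

Lemma chern (a b m : nat) (Hn : (1 <= a+b)%nat) (l c : R) :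
  sum_f_R0 (fun r => urn_pmf a b m r * (exp (l * (INR r / INR (a+b+m) - INR a / INR (a+b)) - c))) (a+m)
  <= exp (l^2 / INR (a+b) - c).
Proof.
  apply Rle_trans with (exp (- c) * sum_f_R0 (fun r => urn_pmf a b m r * exp (l * (INR r / INR (a+b+m) - INR a / INR (a+b)))) (a+m)).
  { rewrite scal_sum. right. apply sum_eq. intros i _.
    unfold Rminus. rewrite exp_plus. ring. }
  apply Rle_trans with (exp (- c) * exp (l ^ 2 * (/ INR (a + b) - / INR (a + b + m)))).
  { apply Rmult_le_compat_l; [left; apply exp_pos| apply mgf; auto]. }
  rewrite <- exp_plus. apply exp_le.
  assert (0 < INR (a+b+m)) by (apply lt_0_INR; lia).
  assert (0 < / INR (a+b+m)) by (apply Rinv_0_lt_compat; auto).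
  assert (0 <= l^2) by nra. unfold Rdiv. nra.
Qed.

Theorem lemma4p8 (a b m : nat) (t : R) :
  (1 <= a + b)%nat -> 0 < t ->
  urn_dev_prob a b m t
    <= 2 * exp (- (t ^ 2 * INR a ^ 2) / (8 * INR (a + b))).
Proof.
  intros Hn Ht.
  set (n := INR (a+b)). set (N := INR (a+b+m)).
  assert (Hn0 : 0 < n) by (unfold n; apply lt_0_INR; lia).
  assert (HN : N = n + INR m) by (unfold N, n; rewrite plus_INR; ring).
  assert (HN0 : 0 < N) by (rewrite HN; pose proof (pos_INR m); lra).
  assert (Ha : 0 <= INR a) by apply pos_INR.
  set (s := t * INR a / n). set (l := t * INR a / 4).
  assert (Hs : 0 <= s) by (unfold s; apply Rdiv_le_0_compat; nra).
  assert (Hl : 0 <= l) by (unfold l; nra).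
  unfold urn_dev_prob.
  apply Rle_trans with (sum_f_R0 (fun r => urn_pmf a b m r * exp (l * (INR r / N - INR a / n) - l * s)
      + urn_pmf a b m r * exp ((- l) * (INR r / N - INR a / n) - l * s)) (a + m)).
  { apply sum_Rle. intros r _.
    pose proof (pmf_nonneg a b m r).
    pose proof (exp_pos (l * (INR r / N - INR a / n) - l * s)).
    pose proof (exp_pos ((- l) * (INR r / N - INR a / n) - l * s)).
    destruct (Rle_dec (t * urn_mu a b m) (Rabs (INR r - urn_mu a b m))) as [Hc|Hc].
    - assert (E1 : INR r - urn_mu a b m = N * (INR r / N - INR a / n)).
      { unfold urn_mu. fold n. rewrite HN. field. lra. }
      assert (E2 : t * urn_mu a b m = N * s).
      { unfold urn_mu, s. fold n. rewrite HN. field. lra. }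
      rewrite E1, E2, Rabs_mult, (Rabs_right N) in Hc by lra.
      assert (Hc' : s <= Rabs (INR r / N - INR a / n)) by (apply (Rmult_le_reg_l N); lra).
      destruct (Rle_dec 0 (INR r / N - INR a / n)) as [Hd|Hd].
      + rewrite Rabs_right in Hc' by lra.
        pose proof (exp_ineq1_le (l * (INR r / N - INR a / n) - l * s)).
        assert (0 <= l * (INR r / N - INR a / n) - l * s) by nra. nra.
      + rewrite Rabs_left in Hc' by lra.
        pose proof (exp_ineq1_le ((- l) * (INR r / N - INR a / n) - l * s)).
        assert (0 <= (- l) * (INR r / N - INR a / n) - l * s) by nra. nra.
    - nra. }
  rewrite plus_sum.
  pose proof (chern a b m Hn l (l * s)) as C1.
  pose proof (chern a b m Hn (- l) (l * s)) as C2.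
  fold n N in C1, C2.
  assert (exp (l ^ 2 / n - l * s) <= exp (- (t ^ 2 * INR a ^ 2) / (8 * n))).
  { apply exp_le. unfold l, s.
    replace ((t * INR a / 4) ^ 2 / n - t * INR a / 4 * (t * INR a / n))
      with (- (3/16) * ((t * INR a)^2 / n)) by (field; lra).
    replace (- (t ^ 2 * INR a ^ 2) / (8 * n)) with (- (1/8) * ((t * INR a)^2 / n)) by (field; lra).
    assert (0 <= (t * INR a)^2 / n) by (apply Rdiv_le_0_compat; nra). lra. }
  replace ((- l) ^ 2) with (l ^ 2) in C2 by ring.
  lra.
Qed.
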